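(* Let $\mathcal{A}^*$ be a formal graded-commutative differential graded algebra over a field of characteristic zero and let $\alpha\in H^1(\mathcal{A}^* )$. Then the deformation spectral sequence $\mathcal{F}^*_r(\mathcal{A}^*,\alpha)$ (with $\mathcal{A}^*$ regarded as a differential graded module over itself) degenerates at its second term $\mathcal{F}^*_2=\mathrm{Ker}\,L_\alpha/\mathrm{Im}\,L_\alpha$, where $L_\alpha:H^*(\mathcal{A}^* )\to H^{*+1}(\mathcal{A}^* )$ is multiplication by $\alpha$; i.e. all differentials $d_r$, $r\geq2$, vanish.
   Context: A DGA is formal if it has the same minimal (Sullivan) model as its cohomology algebra (with zero differential). Deformation spectral sequence for a DG-module $\mathcal{N}^*$ over $\mathcal{A}^*$ and $\alpha=[\xi]$, $\xi\in\mathcal{A}^1$ a cocycle: let $\mathcal{N}^*[[t]]$ be formal power series in $t$ over $\mathcal{N}^*$ with differential $D_tx=dx+t\xi x$; the short exact sequence $0\to\mathcal{N}^*[[t]]\xrightarrow{t}\mathcal{N}^*[[t]]\xrightarrow{\pi}\mathcal{N}^*\to0$ ($\pi$: $t\mapsto0$) yields an exact couple with $D=H^*(\mathcal{N}^*[[t]],D_t)$, $E=H^*(\mathcal{N}^* )$, $i=t$, $j=\pi_*$, $k$ = connecting homomorphism; $\mathcal{F}^*_r(\mathcal{N}^*,\alpha)$ is the spectral sequence of this exact couple (Massey derived couples), which up to isomorphism depends only on $\alpha$. *)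

(* Defs.v *)
From HB Require Import structures.
From mathcomp Require Import all_boot all_order all_algebra.
Set Implicit Arguments. Unset Strict Implicit. Unset Printing Implicit Defensive.
Import GRing.Theory.
Local Open Scope ring_scope.

Definition tr (A : nat -> Type) {m n : nat} (e : m = n) (x : A m) : A n :=
  eq_rect m A x n e.

Record dga (R : fieldType) : Type := Dga {
  car : nat -> lmodType R;
  dd : forall n, car n -> car n.+1;
  mul : forall p q, car p -> car q -> car (p + q);
  one : car 0;
  dd_lin : forall n (a : R) (x y : car n), dd (a *: x + y) = a *: dd x + dd y;
  dd_dd : forall n (x : car n), dd (dd x) = 0;
  mul_linl : forall p q (a : R) (x y : car p) (z : car q),
      mul (a *: x + y) z = a *: mul x z + mul y z;
  mul_linr : forall p q (a : R) (x : car p) (y z : car q),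
      mul x (a *: y + z) = a *: mul x y + mul x z;
  mulA : forall p q r (x : car p) (y : car q) (z : car r),
      mul (mul x y) z = @tr (fun n => car n) _ _ (addnA p q r) (mul x (mul y z));
  mul1 : forall p (x : car p), mul one x = x;
  mulr1 : forall p (x : car p), @tr (fun n => car n) _ _ (addn0 p) (mul x one) = x;
  mulC : forall p q (x : car p) (y : car q),
      mul x y = (-1) ^+ (p * q) *: @tr (fun n => car n) _ _ (addnC q p) (mul y x);
  leibniz : forall p q (x : car p) (y : car q),
      dd (mul x y) = @tr (fun n => car n) _ _ (addSn p q) (mul (dd x) y)
                     + (-1) ^+ p *: @tr (fun n => car n) _ _ (addnS p q) (mul x (dd y))
}.

Section DGA.
Variable R : fieldType.
Variable A : dga R.

Definition cocycle n (x : car A n) : Prop := dd x = 0.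

Definition coboundary (n : nat) : car A n -> Prop :=
  match n as n0 return car A n0 -> Prop with
  | 0 => fun x => x = 0
  | m.+1 => fun x => exists w : car A m, x = dd w
  end.

(* degree-n elements of A^*[[t]] : formal power series sum_k t^k Y_k, Y_k in A^n *)
Definition series n := nat -> car A n.

Section Deform.
Variable xi : car A 1.

(* D_t Y = dY + t xi Y *)
Definition Dt n (Y : series n) : series n.+1 :=
  fun k => dd (Y k) + (match k with 0 => 0 | k'.+1 => (mul xi (Y k') : car A n.+1) end).

Definition cocycle_t n (Y : series n) : Prop := forall k, Dt Y k = 0.

Definition coboundary_t (n : nat) : series n -> Prop :=
  match n as n0 return series n0 -> Prop with
  | 0 => fun Y => forall k, Y k = 0
  | m.+1 => fun Y => exists W : series m, forall k, Y k = Dt W k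
  end.

Definition tmul n (Y : series n) : series n :=
  fun k => match k with 0 => 0 | k'.+1 => Y k' end.
Definition tpow n (r : nat) (Y : series n) : series n := iter r (@tmul n) Y.

(* Exact couple D = H(A[[t]], D_t), E = H(A), i = t, j = pi_* (t |-> 0),
   k = connecting homomorphism, all on representatives:
   - i [Y] = [t Y],   j [Y] = [Y_0],
   - k [x] = [C]  iff  there is a lift X of x (X_0 = x) with  t C = D_t X
     (the connecting homomorphism of 0 -> N[[t]] -t-> N[[t]] -pi-> N -> 0). *)
Definition conn_rel n (x : car A n) (C : series n.+1) : Prop :=
  exists X : series n, X 0%N = x /\ (forall k, tmul C k = Dt X k).

(* The r-th differential (r >= 1) of the derived (Massey) couples:
   E_r = k^{-1}(Im i^{r-1}) / j(Ker i^{r-1}),  d_r [x] = [j y] where k x = i^{r-1} y.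
   d_r vanishes iff for all x in E and y in D with k x = i^{r-1} y,
   j y lies in j(Ker i^{r-1}). *)
Definition dr_vanishes (r : nat) : Prop :=
  forall n (x : car A n) (Y : series n.+1),
    cocycle x -> cocycle_t Y ->
    (exists C : series n.+1,
        conn_rel x C /\ coboundary_t (fun k => C k - tpow r.-1 Y k)) ->
    exists Z : series n.+1,
      cocycle_t Z /\ coboundary_t (tpow r.-1 Z) /\ coboundary (Y 0%N - Z 0%N).

End Deform.
End DGA.

Definition dga_qiso (R : fieldType) (M A : dga R) (f : forall n, car M n -> car A n)
  : Prop :=
  [/\ (forall n (a : R) (x y : car M n), f n (a *: x + y) = a *: f n x + f n y),
      (forall n (x : car M n), f n.+1 (dd x) = dd (f n x)),
      (forall p q (x : car M p) (y : car M q), f (p + q)%N (mul x y) = mul (f p x) (f q y)),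
      f 0%N (one M) = one A &
      ((forall n (x : car M n), cocycle x -> coboundary (f n x) -> coboundary x) /\
       (forall n (y : car A n), cocycle y ->
          exists x : car M n, cocycle x /\ coboundary (f n x - y)))].

(* Formality: A and its cohomology (a DGA with zero differential) have a common
   model, i.e. there are quasi-isomorphisms  A <- M -> B  with B having zero
   differential (B is then isomorphic to (H^*(A), 0)). *)
Definition formal (R : fieldType) (A : dga R) : Prop :=
  exists (M B : dga R),
    (forall n (b : car B n), dd b = 0) /\
    exists (f : forall n, car M n -> car A n) (g : forall n, car M n -> car B n),
      dga_qiso f /\ dga_qiso g.

(* Main.v *)
From mathcomp Require Import all_boot all_order all_algebra.
From Stdlib Require Import FunctionalExtensionality ClassicalEpsilon Classical.
Set Implicit Arguments. Unset Strict Implicit. Unset Printing Implicit Defensive.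
Import GRing.Theory.
Require Import Defs.
Local Open Scope ring_scope.

Lemma tr_id (T : nat -> Type) n (e : n = n) (x : T n) : @tr T n n e x = x.
Proof. by rewrite (eq_irrelevance e (erefl n)). Qed.

Section Basic.
Variable R : fieldType.
Variable A : dga R.

Lemma dd0 n : dd (0 : car A n) = 0.
Proof.
have := dd_lin (1:R) (0 : car A n) 0.
rewrite !scale1r addr0 => h; apply: (@addrI _ (dd (0 : car A n))); by rewrite addr0 -h.
Qed.

Lemma ddZ n a (x : car A n) : dd (a *: x) = a *: dd x.
Proof. by have := dd_lin a x 0; rewrite !addr0 dd0 addr0. Qed.

Lemma ddD n (x y : car A n) : dd (x + y) = dd x + dd y.
Proof. by have := dd_lin 1 x y; rewrite !scale1r. Qed.

Lemma ddN n (x : car A n) : dd (- x) = - dd x.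
Proof. by rewrite -scaleN1r ddZ scaleN1r. Qed.

Lemma ddB n (x y : car A n) : dd (x - y) = dd x - dd y.
Proof. by rewrite ddD ddN. Qed.

Lemma mul0l p q (z : car A q) : mul (0 : car A p) z = 0.
Proof.
have := mul_linl (1:R) (0 : car A p) 0 z.
rewrite !scale1r addr0 => h; apply: (@addrI _ (mul (0 : car A p) z)); by rewrite addr0 -h.
Qed.

Lemma mul0r p q (z : car A p) : mul z (0 : car A q) = 0.
Proof.
have := mul_linr (1:R) z (0 : car A q) 0.
rewrite !scale1r addr0 => h; apply: (@addrI _ (mul z (0 : car A q))); by rewrite addr0 -h.
Qed.

Lemma mulZl p q a (x : car A p) (z : car A q) : mul (a *: x) z = a *: mul x z.
Proof. by have := mul_linl a x 0 z; rewrite addr0 mul0l addr0. Qed.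
Lemma mulZr p q a (x : car A p) (z : car A q) : mul x (a *: z) = a *: mul x z.
Proof. by have := mul_linr a x z 0; rewrite addr0 mul0r addr0. Qed.
Lemma mulDl p q (x y : car A p) (z : car A q) : mul (x + y) z = mul x z + mul y z.
Proof. by have := mul_linl (1:R) x y z; rewrite !scale1r. Qed.
Lemma mulDr p q (x : car A p) (y z : car A q) : mul x (y + z) = mul x y + mul x z.
Proof. by have := mul_linr (1:R) x y z; rewrite !scale1r. Qed.
Lemma mulNl p q (x : car A p) (z : car A q) : mul (- x) z = - mul x z.
Proof. by rewrite -scaleN1r mulZl scaleN1r. Qed.
Lemma mulNr p q (x : car A p) (z : car A q) : mul x (- z) = - mul x z.
Proof. by rewrite -scaleN1r mulZr scaleN1r. Qed.
Lemma mulBl p q (x y : car A p) (z : car A q) : mul (x - y) z = mul x z - mul y z.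
Proof. by rewrite mulDl mulNl. Qed.
Lemma mulBr p q (x : car A p) (y z : car A q) : mul x (y - z) = mul x y - mul x z.
Proof. by rewrite mulDr mulNr. Qed.

Lemma dd_one : dd (one A) = 0.
Proof.
have e : mul (one A) (one A) = one A by exact: mul1.
have e2 : mul (dd (one A)) (one A) = dd (one A) by have := mulr1 (dd (one A)); rewrite tr_id.
have := leibniz (one A) (one A); rewrite !tr_id e expr0 scale1r e2 mul1 => h.
apply: (@addrI _ (dd (one A))); by rewrite addr0 -h.
Qed.

End Basic.

Section Series.
Variable R : fieldType.
Variable A : dga R.
Variable xi : car A 1.
Hypothesis hxi : cocycle xi.
Hypothesis h2 : (2%:R : R) != 0.

Lemma xixi : mul xi xi = 0.
Proof.
have := mulC xi xi; rewrite tr_id expr1 scaleN1r => /eqP.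
rewrite -subr_eq0 opprK -mulr2n -scaler_nat scaler_eq0 (negbTE h2) /=.
by move/eqP.
Qed.

Lemma mulxixi n (y : car A n) : mul xi (mul xi y) = 0.
Proof.
have := mulA xi xi y; rewrite xixi mul0l => h.
by rewrite -[LHS](@tr_id (fun n => car A n) _ (addnA 1 1 n)) -h.
Qed.

Lemma DtB n (Y Z : series A n) : Dt xi (fun k => Y k - Z k) = fun k => Dt xi Y k - Dt xi Z k.
Proof.
apply: functional_extensionality => -[|k] /=; rewrite /Dt ddB.
  by rewrite !addr0.
by rewrite mulBr addrACA opprD.
Qed.

Lemma DtD n (Y Z : series A n) : Dt xi (fun k => Y k + Z k) = fun k => Dt xi Y k + Dt xi Z k.
Proof.
apply: functional_extensionality => -[|k] /=; rewrite /Dt ddD.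
  by rewrite !addr0.
by rewrite mulDr addrACA.
Qed.

Lemma DtZ n a (Y : series A n) : Dt xi (fun k => a *: Y k) = fun k => a *: Dt xi Y k.
Proof.
apply: functional_extensionality => -[|k] /=; rewrite /Dt ddZ.
  by rewrite !addr0.
by rewrite mulZr scalerDr.
Qed.

Lemma Dt0 n : Dt xi (fun _ => 0 : car A n) = fun _ => 0.
Proof.
apply: functional_extensionality => -[|k] /=; rewrite /Dt dd0 ?mul0r; by rewrite addr0.
Qed.

Lemma DtDt n (Y : series A n) : Dt xi (Dt xi Y) = fun _ => 0.
Proof.
apply: functional_extensionality => -[|k] /=; rewrite /Dt.
  rewrite /= !addr0; exact: dd_dd.
rewrite (ddD (dd (Y k.+1))) dd_dd add0r (leibniz xi (Y k)) hxi mul0l !tr_id add0r expr1 scaleN1r.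
case: k => [|k]; first by rewrite addr0 addNr.
by rewrite (mulDr xi (dd (Y k.+1))) mulxixi addr0 addNr.
Qed.

Lemma Dt_tmul n (Y : series A n) : Dt xi (tmul Y) = tmul (Dt xi Y).
Proof.
apply: functional_extensionality => -[|k] /=; rewrite /Dt /tmul.
  by rewrite dd0 addr0.
by case: k => [|k] //=; rewrite mul0r.
Qed.

Lemma tmul_inj n (Y Z : series A n) : tmul Y = tmul Z -> Y = Z.
Proof.
move=> h; apply: functional_extensionality => k.
by have := congr1 (fun f => f k.+1) h.
Qed.

Lemma tmulB n (Y Z : series A n) : tmul (fun k => Y k - Z k) = fun k => tmul Y k - tmul Z k.
Proof. by apply: functional_extensionality => -[|k] //=; rewrite subr0. Qed.

Lemma tpowE n r (Y : series A n) k : tpow r Y k = if (k < r)%N then 0 else Y (k - r)%N.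
Proof.
elim: r k => [|r IH] k /=; first by rewrite subn0.
rewrite /tmul; case: k => [|k] //=; by rewrite IH ltnS subSS.
Qed.

Lemma tpowS n r (Y : series A n) : tpow r.+1 Y = tmul (tpow r Y).
Proof. by []. Qed.

Lemma Dt_tpow n r (Y : series A n) : Dt xi (tpow r Y) = tpow r (Dt xi Y).
Proof. elim: r => [|r IH] //. by rewrite !tpowS Dt_tmul IH. Qed.

Lemma tpowB n r (Y Z : series A n) : tpow r (fun k => Y k - Z k) = fun k => tpow r Y k - tpow r Z k.
Proof.
apply: functional_extensionality => k; rewrite !tpowE; case: ifP => //; by rewrite subr0.
Qed.

Lemma cobt_lin n a (Y Z : series A n) :
  coboundary_t xi Y -> coboundary_t xi Z -> coboundary_t xi (fun k => a *: Y k + Z k).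
Proof.
case: n Y Z => [|n] Y Z /=.
  by move=> h1 h2' k; rewrite h1 h2' scaler0 addr0.
move=> [W1 h1] [W2 h2']; exists (fun k => a *: W1 k + W2 k) => k.
by rewrite DtD DtZ h1 h2'.
Qed.

Lemma cobt0 n : coboundary_t xi (fun _ => 0 : car A n).
Proof.
case: n => [|n] //=. exists (fun _ => 0) => k. by rewrite Dt0.
Qed.

Lemma cobt_ext n (Y Z : series A n) : (forall k, Y k = Z k) -> coboundary_t xi Y -> coboundary_t xi Z.
Proof. by move=> h; have -> : Y = Z by apply: functional_extensionality. Qed.

Lemma cobtD n (Y Z : series A n) :
  coboundary_t xi Y -> coboundary_t xi Z -> coboundary_t xi (fun k => Y k + Z k).
Proof. move=> h1 h2'; apply: cobt_ext (cobt_lin 1 h1 h2') => k; by rewrite scale1r. Qed.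

Lemma cobtN n (Y : series A n) : coboundary_t xi Y -> coboundary_t xi (fun k => - Y k).
Proof. move=> h1; apply: cobt_ext (cobt_lin (-1) h1 (@cobt0 n)) => k; by rewrite addr0 scaleN1r. Qed.

Lemma cobtB n (Y Z : series A n) :
  coboundary_t xi Y -> coboundary_t xi Z -> coboundary_t xi (fun k => Y k - Z k).
Proof. move=> h1 h2'; exact: cobtD h1 (cobtN h2'). Qed.

Lemma cobt_tmul n (Y : series A n) : coboundary_t xi Y -> coboundary_t xi (tmul Y).
Proof.
case: n Y => [|n] Y /=.
  by move=> h [|k] //=.
move=> [W h]; exists (tmul W) => k; rewrite Dt_tmul.
have -> : Y = Dt xi W by apply: functional_extensionality.
by [].
Qed.

Lemma cobt_tpow n r (Y : series A n) : coboundary_t xi Y -> coboundary_t xi (tpow r Y).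
Proof. elim: r => [|r IH] //= h. rewrite -/(tpow r Y). exact: cobt_tmul (IH h). Qed.

Lemma cobt_Dt n (W : series A n) : coboundary_t xi (Dt xi W).
Proof. by exists W. Qed.

Lemma cocycle_t_Dt n (Y : series A n) : cocycle_t xi Y <-> Dt xi Y = (fun _ => 0).
Proof.
split => [h|h k]; first by apply: functional_extensionality.
by rewrite h.
Qed.

Lemma cobt_cocycle n (Y : series A n) : coboundary_t xi Y -> cocycle_t xi Y.
Proof.
case: n Y => [|n] Y /=.
  move=> h k; rewrite /Dt h dd0; case: k => [|k] /=; by rewrite ?h ?mul0r addr0.
move=> [W h]; have -> : Y = Dt xi W by apply: functional_extensionality.
by move=> k; rewrite DtDt.
Qed.

Lemma cob_lin n a (x y : car A n) : coboundary x -> coboundary y -> coboundary (a *: x + y).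
Proof.
case: n x y => [|n] x y /=; first by move=> -> ->; rewrite scaler0 addr0.
by move=> [w1 ->] [w2 ->]; exists (a *: w1 + w2); rewrite dd_lin.
Qed.

Lemma cob0 n : coboundary (0 : car A n).
Proof. case: n => [|n] //=; exists 0; by rewrite dd0. Qed.

Lemma cobD n (x y : car A n) : coboundary x -> coboundary y -> coboundary (x + y).
Proof. move=> h1 h2'; have := cob_lin 1 h1 h2'; by rewrite scale1r. Qed.
Lemma cobN n (x : car A n) : coboundary x -> coboundary (- x).
Proof. move=> h1; have := cob_lin (-1) h1 (@cob0 n); by rewrite addr0 scaleN1r. Qed.
Lemma cobB n (x y : car A n) : coboundary x -> coboundary y -> coboundary (x - y).
Proof. move=> h1 h2'; exact: cobD h1 (cobN h2'). Qed.
Lemma cob_dd n (w : car A n) : coboundary (dd w).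
Proof. by exists w. Qed.
Lemma cob_cocycle n (x : car A n) : coboundary x -> cocycle x.
Proof. case: n x => [|n] x /=; rewrite /cocycle; first by move=> ->; rewrite dd0.
by move=> [w ->]; rewrite dd_dd. Qed.

Lemma cobt_j n (Y : series A n) : coboundary_t xi Y -> coboundary (Y 0%N).
Proof.
case: n Y => [|n] Y /=; first by move=> ->.
by move=> [W ->]; rewrite /Dt addr0; exists (W 0%N).
Qed.

End Series.

Section Conn.
Variable R : fieldType.
Variable A : dga R.
Variable xi : car A 1.
Hypothesis hxi : cocycle xi.
Hypothesis h2 : (2%:R : R) != 0.

Definition conn_wit n (x : car A n) : series A n.+1 :=
  fun k => if k is 0 then mul xi x else 0.

Lemma conn_ex n (x : car A n) : cocycle x -> conn_rel xi x (conn_wit x).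
Proof.
move=> hx; exists (fun k => if k is 0 then x else 0); split => // -[|[|k]] /=; rewrite /Dt /=.
- by rewrite hx addr0.
- by rewrite dd0 add0r.
- by rewrite dd0 mul0r addr0.
Qed.

Lemma shift_lemma n (Cd : series A n.+1) (D : series A n) :
  (forall k, tmul Cd k = Dt xi D k) -> D 0%N = 0 -> Cd = Dt xi (fun k => D k.+1).
Proof.
move=> h h0; apply: tmul_inj; rewrite -Dt_tmul.
have -> : tmul (fun k => D k.+1) = D by apply: functional_extensionality => -[|k] //=.
by apply: functional_extensionality.
Qed.

Lemma conn_cocycle n (x : car A n) C : conn_rel xi x C -> cocycle_t xi C.
Proof.
move=> [X [_ h]]; apply/cocycle_t_Dt; apply: tmul_inj.
rewrite -Dt_tmul.
have -> : tmul C = Dt xi X by apply: functional_extensionality.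
rewrite DtDt //. by apply: functional_extensionality => -[|k].
Qed.

Lemma conn_welldef n (x1 x2 : car A n) C1 C2 :
  conn_rel xi x1 C1 -> conn_rel xi x2 C2 -> coboundary (x1 - x2) ->
  coboundary_t xi (fun k => C1 k - C2 k).
Proof.
move=> [X1 [e1 h1]] [X2 [e2 h2']] hc.
have hD : forall k, tmul (fun k => C1 k - C2 k) k = Dt xi (fun k => X1 k - X2 k) k.
  by move=> k; rewrite tmulB DtB h1 h2'.
case: n x1 x2 C1 C2 X1 X2 e1 e2 h1 h2' hc hD => [|m] x1 x2 C1 C2 X1 X2 e1 e2 h1 h2' hc hD.
  rewrite /= in hc.
  have := shift_lemma hD; rewrite e1 e2 hc => /(_ erefl) ->.
  by exists (fun k => X1 k.+1 - X2 k.+1).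
move: hc => [u hu].
pose U : series A m := fun k => if k is 0 then u else 0.
set D := (fun k => X1 k - X2 k) in hD.
have hD' : forall k, tmul (fun k => C1 k - C2 k) k = Dt xi (fun k => D k - Dt xi U k) k.
  by move=> k; rewrite DtB DtDt // subr0 hD.
have e0 : D 0%N - Dt xi U 0%N = 0 by rewrite /D /Dt /= addr0 e1 e2 hu subrr.
rewrite (shift_lemma hD' e0). by eexists.
Qed.

End Conn.

Section Tools.
Variable R : fieldType.

Lemma tpow_inj (A : dga R) n r (Y Z : series A n) : tpow r Y = tpow r Z -> Y = Z.
Proof. elim: r => [|r IH] //= h. apply: IH. exact: tmul_inj h. Qed.

Lemma tpow_split (A : dga R) n k (Y : series A n) :
  (forall i, (i < k)%N -> Y i = 0) -> Y = tpow k (fun i => Y (i + k)%N).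
Proof.
move=> h; apply: functional_extensionality => i; rewrite tpowE.
case: ifP => hik; first exact: h.
by rewrite subnK // leqNgt hik.
Qed.

Lemma Dt_causal (A : dga R) xi n (Y Z : series A n) i :
  (forall j, (j <= i)%N -> Y j = Z j) -> Dt xi Y i = Dt xi Z i.
Proof.
move=> h; rewrite /Dt h //; case: i h => [|i] h //=.
by rewrite (h i) // ltnW.
Qed.

Variables (A A' : dga R) (n m : nat).
Variable F : series A n -> series A' m.
Hypothesis hFB : forall Y Z, F (fun k => Y k - Z k) = fun k => F Y k - F Z k.
Hypothesis hFt : forall Y, F (tmul Y) = tmul (F Y).

Lemma F_tpow r Y : F (tpow r Y) = tpow r (F Y).
Proof. elim: r => [|r IH] //. by rewrite !tpowS hFt IH. Qed.

Lemma F_causal Y Z i : (forall j, (j <= i)%N -> Y j = Z j) -> F Y i = F Z i.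
Proof.
move=> h.
have e : (fun k => Y k - Z k) = tpow i.+1 (fun j => Y (j + i.+1)%N - Z (j + i.+1)%N).
  apply: (tpow_split (A:=A) (k:=i.+1) (Y:=fun k => Y k - Z k)) => j hj.
  by rewrite h ?subrr.
have := congr1 (fun f => f i) (hFB Y Z); rewrite e F_tpow tpowE ltnSn => /eqP.
by rewrite eq_sym subr_eq0 => /eqP.
Qed.

Lemma F0 : F (fun _ => 0) = fun _ => 0.
Proof.
have := hFB (fun _ => 0) (fun _ => 0).
have -> : (fun _ : nat => (0 : car A n) - 0) = fun _ => 0.
  by apply: functional_extensionality => k; rewrite subrr.
move=> ->; apply: functional_extensionality => k; by rewrite subrr.
Qed.

Lemma FN Y : F (fun k => - Y k) = fun k => - F Y k.
Proof.
have := hFB (fun _ => 0) Y.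
have -> : (fun k : nat => (0 : car A n) - Y k) = fun k => - Y k.
  by apply: functional_extensionality => k; rewrite sub0r.
move=> ->; rewrite F0; apply: functional_extensionality => k; by rewrite sub0r.
Qed.

Lemma FD Y Z : F (fun k => Y k + Z k) = fun k => F Y k + F Z k.
Proof.
have := hFB Y (fun k => - Z k).
have -> : (fun k : nat => Y k - - Z k) = fun k => Y k + Z k.
  by apply: functional_extensionality => k; rewrite opprK.
move=> ->; rewrite FN; apply: functional_extensionality => k; by rewrite opprK.
Qed.

End Tools.

Section Cone.
Variable R : fieldType.
Hypothesis h2 : (2%:R : R) != 0.
Variables (A A' : dga R) (xi : car A 1) (xi' : car A' 1).
Hypothesis hxi : cocycle xi.
Hypothesis hxi' : cocycle xi'.
Variable phi : forall n, car A n -> car A' n.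
Variable Phi : forall n, series A n -> series A' n.
Hypothesis hPhiB : forall n (Y Z : series A n), Phi (fun k => Y k - Z k) = fun k => Phi Y k - Phi Z k.
Hypothesis hPhit : forall n (Y : series A n), Phi (tmul Y) = tmul (Phi Y).
Hypothesis hPhiD : forall n (Y : series A n), Phi (Dt xi Y) = Dt xi' (Phi Y).
Hypothesis hPhi0 : forall n (Y : series A n), Phi Y 0%N = phi (Y 0%N).

Variables (N M : nat).
Variable T : series A' M -> series A' N.
Variable delta : car A' M -> car A' N.
Hypothesis hTB : forall Y Z, T (fun k => Y k - Z k) = fun k => T Y k - T Z k.
Hypothesis hTt : forall Y, T (tmul Y) = tmul (T Y).
Hypothesis hT0 : forall Y, T Y 0%N = delta (Y 0%N).
Hypothesis hDT : forall Y, Dt xi' (T Y) = fun _ => 0.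
Hypothesis hstep : forall (al : car A N.+1) (be : car A' N),
  dd al = 0 -> dd be = phi al -> exists y w, dd y = al /\ be - phi y = delta w.

Variables (a : series A N.+1) (b : series A' N).
Hypothesis ha : Dt xi a = fun _ => 0.
Hypothesis hb : Dt xi' b = Phi a.

Definition state := (series A N * series A' M)%type.
Definition da (Y : series A N) := fun k => a k - Dt xi Y k.
Definition db (s : state) := fun k => b k - Phi s.1 k - T s.2 k.
Definition Inv k (s : state) := forall i, (i < k)%N -> da s.1 i = 0 /\ db s i = 0.

Definition cst n (x : car A n) : series A n := fun i => if i is 0 then x else 0.
Definition cst' n (x : car A' n) : series A' n := fun i => if i is 0 then x else 0.

Lemma step_ex k s : Inv k s -> exists s' : state, Inv k.+1 s' /\
   forall i, (i < k)%N -> s'.1 i = s.1 i /\ s'.2 i = s.2 i.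
Proof.
case: s => Y W hI.
set al := fun i => da Y (i + k)%N.
set be := fun i => db (Y, W) (i + k)%N.
have eda : da Y = tpow k al by apply: tpow_split => i /hI [].
have edb : db (Y, W) = tpow k be by apply: tpow_split => i /hI [].
have Dal : Dt xi al = fun _ => 0.
  apply: (@tpow_inj _ _ _ k); rewrite -Dt_tpow -eda.
  rewrite /da DtB ha DtDt //.
  by apply: functional_extensionality => i; rewrite tpowE subrr; case: ifP.
have Dbe : Dt xi' be = Phi al.
  apply: (@tpow_inj _ _ _ k); rewrite -Dt_tpow -edb.
  rewrite -(F_tpow (hPhit (n:=N.+1))) -eda /db /da /=.
  rewrite !DtB hb hDT hPhiB hPhiD.
  by apply: functional_extensionality => i; rewrite subr0.
have h1 : dd (al 0%N) = 0.
  by have := congr1 (fun f => f 0%N) Dal; rewrite /Dt /= addr0.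
have h2' : dd (be 0%N) = phi (al 0%N).
  by have := congr1 (fun f => f 0%N) Dbe; rewrite /Dt /= addr0 hPhi0.
have [y [w [hy hw]]] := hstep h1 h2'.
exists (fun i => Y i + tpow k (cst y) i, fun i => W i + tpow k (cst' w) i).
split => /=; last by move=> i hi; rewrite !tpowE hi !addr0.
move=> i; rewrite ltnS leq_eqVlt => /orP [/eqP ->|hi]; split.
- rewrite /da DtD Dt_tpow tpowE ltnn subnn.
  have := congr1 (fun f => f k) eda; rewrite tpowE ltnn subnn /da => e.
  by rewrite opprD addrA e /Dt /= addr0 hy subrr.
- rewrite /db /= (FD (hPhiB (n:=N))) (FD hTB).
  rewrite (F_tpow (hPhit (n:=N))) (F_tpow hTt) !tpowE ltnn subnn.
  have := congr1 (fun f => f k) edb; rewrite tpowE ltnn subnn /db /= => e.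
  rewrite hPhi0 hT0 /=.
  have ee : forall u v p q r : car A' N, u - (v + p) - (q + r) = (u - v - q) - (p + r).
    by move=> u v p q r; rewrite !opprD !addrA; congr (_ + _); rewrite addrAC.
  rewrite ee.
  by rewrite e -hw [phi _ + _]addrC subrK subrr.
- have [e1 _] := hI i hi.
  by rewrite /da DtD Dt_tpow tpowE hi addr0.
- have [_ e1] := hI i hi.
  rewrite /db /= (FD (hPhiB (n:=N))) (FD hTB).
  rewrite (F_tpow (hPhit (n:=N))) (F_tpow hTt) !tpowE hi !addr0.
  exact: e1.
Qed.

Lemma cone_gen : exists (Y : series A N) (W : series A' M),
  Dt xi Y = a /\ (fun k => b k - Phi Y k) = T W.
Proof.
have ex : forall k (s : state), exists s' : state, Inv k s -> (Inv k.+1 s' /\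
   forall i, (i < k)%N -> s'.1 i = s.1 i /\ s'.2 i = s.2 i).
  move=> k s; case: (classic (Inv k s)) => h.
    by have [s' hs'] := step_ex h; exists s'.
  by exists s.
pose step k s := proj1_sig (constructive_indefinite_description _ (ex k s)).
have hstep' : forall k s, Inv k s -> (Inv k.+1 (step k s) /\
   forall i, (i < k)%N -> (step k s).1 i = s.1 i /\ (step k s).2 i = s.2 i).
  move=> k s; exact: (proj2_sig (constructive_indefinite_description _ (ex k s))).
pose st := fix st k : state := if k is k'.+1 then step k' (st k') else (fun _ => 0, fun _ => 0).
have Ist : forall k, Inv k (st k).
  elim => [|k IH]; first by move=> i.
  exact: (hstep' k _ IH).1.
have agree1 : forall k i, (i < k)%N -> (st k.+1).1 i = (st k).1 i /\ (st k.+1).2 i = (st k).2 i.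
  move=> k i hi; exact: ((hstep' k _ (Ist k)).2 i hi).
have agree : forall d k i, (i < k)%N -> (st (d + k)%N).1 i = (st k).1 i /\ (st (d + k)%N).2 i = (st k).2 i.
  elim => [|d IH] k i hi //=.
  have [e1 e2] := agree1 (d + k)%N i (leq_trans hi (leq_addl _ _)).
  have [e3 e4] := IH k i hi.
  by rewrite e1 e2 e3 e4.
pose Y := fun i => (st i.+1).1 i.
pose W := fun i => (st i.+1).2 i.
have hY : forall k j, (j <= k)%N -> Y j = (st k.+1).1 j /\ W j = (st k.+1).2 j.
  move=> k j hj; rewrite /Y /W.
  have := agree (k - j)%N j.+1 j (ltnSn j); rewrite addnS subnK //.
  by move=> [-> ->].
exists Y, W; split.
- apply: functional_extensionality => k.
  rewrite (@Dt_causal _ _ xi _ Y (st k.+1).1 k); last by move=> j /(hY k j) [].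
  have [e _] := Ist k.+1 k (ltnSn k).
  by move: e; rewrite /da => /eqP; rewrite subr_eq0 => /eqP.
- apply: functional_extensionality => k.
  rewrite (F_causal (hPhiB (n:=N)) (hPhit (n:=N)) (Z:=(st k.+1).1)); last by move=> j /(hY k j) [].
  rewrite (F_causal hTB hTt (Y:=W) (Z:=(st k.+1).2)); last by move=> j /(hY k j) [].
  have [_ e] := Ist k.+1 k (ltnSn k).
  by move: e; rewrite /db => /eqP; rewrite subr_eq0 => /eqP.
Qed.

End Cone.

Section Transfer.
Variable R : fieldType.
Hypothesis h2 : (2%:R : R) != 0.
Variables (A A' : dga R) (xi : car A 1) (xi' : car A' 1).
Hypothesis hxi : cocycle xi.
Hypothesis hxi' : cocycle xi'.
Variable phi : forall n, car A n -> car A' n.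
Variable Phi : forall n, series A n -> series A' n.
Hypothesis hPhiB : forall n (Y Z : series A n), Phi (fun k => Y k - Z k) = fun k => Phi Y k - Phi Z k.
Hypothesis hPhit : forall n (Y : series A n), Phi (tmul Y) = tmul (Phi Y).
Hypothesis hPhiD : forall n (Y : series A n), Phi (Dt xi Y) = Dt xi' (Phi Y).
Hypothesis hPhi0 : forall n (Y : series A n), Phi Y 0%N = phi (Y 0%N).
Hypothesis hphiB : forall n (x y : car A n), phi (x - y) = phi x - phi y.
Hypothesis hphid : forall n (x : car A n), phi (dd x) = dd (phi x).
Hypothesis hEinj : forall n (x : car A n), cocycle x -> coboundary (phi x) -> coboundary x.
Hypothesis hEsurj : forall n (y : car A' n), cocycle y -> exists x, cocycle x /\ coboundary (phi x - y).

Lemma phi0 n : phi (0 : car A n) = 0.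
Proof. by have := hphiB (0 : car A n) 0; rewrite !subrr. Qed.

Lemma phi_cob n (x : car A n) : coboundary x -> coboundary (phi x).
Proof.
case: n x => [|n] x /=; first by move=> ->; rewrite phi0.
by move=> [w ->]; exists (phi w).
Qed.

Lemma phi_cocycle n (x : car A n) : cocycle x -> cocycle (phi x).
Proof. by rewrite /cocycle -hphid => ->; rewrite phi0. Qed.

Lemma Phi_cobt n (Y : series A n) : coboundary_t xi Y -> coboundary_t xi' (Phi Y).
Proof.
case: n Y => [|n] Y /=.
  move=> h k; have -> : Y = fun _ => 0 by apply: functional_extensionality.
  by rewrite (F0 (hPhiB (n:=0))).
move=> [W h]; exists (Phi W) => k.
have -> : Y = Dt xi W by apply: functional_extensionality.
by rewrite hPhiD.
Qed.

Lemma Phi_cocycle n (Y : series A n) : cocycle_t xi Y -> cocycle_t xi' (Phi Y).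
Proof.
move=> /cocycle_t_Dt h; apply/cocycle_t_Dt; by rewrite -hPhiD h (F0 (hPhiB (n:=n.+1))).
Qed.

Lemma Phi_conn n (x : car A n) C : conn_rel xi x C -> conn_rel xi' (phi x) (Phi C).
Proof.
move=> [X [e h]]; exists (Phi X); split; first by rewrite hPhi0 e.
move=> k; rewrite -hPhit.
have -> : tmul C = Dt xi X by apply: functional_extensionality.
by rewrite hPhiD.
Qed.


Lemma hstep_gen N (al : car A N.+1) (be : car A' N) :
  dd al = 0 -> dd be = phi al -> exists y, dd y = al /\ coboundary (be - phi y).
Proof.
move=> h1 h2'.
have [y0 hy0] : coboundary al.
  apply: hEinj => //; rewrite -h2'; exact: cob_dd.
have hc : cocycle (be - phi y0) by rewrite /cocycle ddB h2' -hphid -hy0 subrr.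
have [z [hz hz']] := hEsurj hc.
exists (y0 + z); split; first by rewrite ddD -hy0 hz addr0.
have -> : be - phi (y0 + z) = - (phi z - (be - phi y0)).
  have -> : phi (y0 + z) = phi y0 + phi z.
    have := hphiB (y0 + z) z; rewrite addrK => ->; by rewrite subrK.
  by rewrite opprB opprD addrA.
exact: cobN.
Qed.

Lemma cone_full N (a : series A N.+1) (b : series A' N) :
  Dt xi a = (fun _ => 0) -> Dt xi' b = Phi a ->
  exists Y : series A N, Dt xi Y = a /\ coboundary_t xi' (fun k => b k - Phi Y k).
Proof.
case: N a b => [|m] a b ha hb.
- have hTB : forall Y Z : series A' 0, (fun _ : nat => 0 : car A' 0) = fun k => (fun _ => 0 : car A' 0) k - (fun _ => 0 : car A' 0) k.
    by move=> *; apply: functional_extensionality => k; rewrite subrr.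
  have hTt : forall Y : series A' 0, (fun _ : nat => 0 : car A' 0) = tmul (fun _ => 0 : car A' 0).
    by move=> *; apply: functional_extensionality => -[|k].
  have hT0 : forall Y : series A' 0, (fun _ : nat => 0 : car A' 0) 0%N = (fun _ : car A' 0 => 0 : car A' 0) (Y 0%N) by [].
  have hDT : forall Y : series A' 0, Dt xi' (fun _ : nat => 0 : car A' 0) = fun _ => 0.
    by move=> *; exact: Dt0.
  have hst : forall (al : car A 1) (be : car A' 0), dd al = 0 -> dd be = phi al ->
      exists y w, dd y = al /\ be - phi y = (fun _ : car A' 0 => 0 : car A' 0) w.
    move=> al be h1 h2'; have [y [hy hc]] := hstep_gen h1 h2'.
    by exists y, 0.
  have [Y [W [e1 e2]]] := cone_gen h2 hxi hPhiB hPhit hPhiD hPhi0 (T := fun _ _ => 0) hTB hTt hT0 hDT hst ha hb.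
  exists Y; split => //= k.
  by have := congr1 (fun f => f k) e2.
- have hT0 : forall Y : series A' m, Dt xi' Y 0%N = dd (Y 0%N) by move=> Y; rewrite /Dt addr0.
  have hst : forall (al : car A m.+2) (be : car A' m.+1), dd al = 0 -> dd be = phi al ->
      exists y w, dd y = al /\ be - phi y = dd w.
    move=> al be h1 h2'; have [y [hy [w hc]]] := hstep_gen h1 h2'.
    by exists y, w.
  have [Y [W [e1 e2]]] := cone_gen h2 hxi hPhiB hPhit hPhiD hPhi0 (@DtB _ _ xi' m) (@Dt_tmul _ _ xi' m)
     hT0 (@DtDt _ _ xi' hxi' h2 m) hst ha hb.
  exists Y; split => //; exists W => k.
  by have := congr1 (fun f => f k) e2.
Qed.

Lemma D_surj n (Y' : series A' n) : cocycle_t xi' Y' ->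
  exists Y, cocycle_t xi Y /\ coboundary_t xi' (fun k => Phi Y k - Y' k).
Proof.
move=> /cocycle_t_Dt hY'.
have hb : Dt xi' Y' = Phi (fun _ => 0 : car A n.+1) by rewrite hY' (F0 (hPhiB (n:=n.+1))).
have [Y [e1 e2]] := cone_full (Dt0 xi n.+1) hb.
exists Y; split; first by apply/cocycle_t_Dt.
apply: cobt_ext (cobtN e2) => k; by rewrite opprB.
Qed.

Lemma D_inj n (Y : series A n) : cocycle_t xi Y -> coboundary_t xi' (Phi Y) -> coboundary_t xi Y.
Proof.
case: n Y => [|m] Y hY.
- move=> /= h0.
  suff : forall k (Z : series A 0), cocycle_t xi Z -> Phi Z = (fun _ => 0) ->
      (forall i, (i < k)%N -> Z i = 0) -> Z k = 0.
    move=> H k; apply: (H k Y hY); first by apply: functional_extensionality.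
    elim: k => [|k IH] i //; rewrite ltnS leq_eqVlt => /orP [/eqP ->|hi].
      apply: (H k Y hY); [by apply: functional_extensionality | exact: IH].
    exact: IH.
  move=> k Z hZ hPZ hlow.
  have eZ := tpow_split hlow.
  have hV : Dt xi (fun i => Z (i + k)%N) = fun _ => 0.
    apply: (@tpow_inj _ _ _ k); rewrite -Dt_tpow -eZ.
    move/cocycle_t_Dt: hZ => ->; apply: functional_extensionality => i.
    by rewrite tpowE; case: ifP.
  have hPV : Phi (fun i => Z (i + k)%N) = fun _ => 0.
    apply: (@tpow_inj _ _ _ k); rewrite -(F_tpow (hPhit (n:=0))) -eZ hPZ.
    apply: functional_extensionality => i.
    by rewrite tpowE; case: ifP.
  have c1 : cocycle (Z k).
    by have := congr1 (fun f => f 0%N) hV; rewrite /Dt /= addr0.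
  have c2 : coboundary (phi (Z k)).
    by have := congr1 (fun f => f 0%N) hPV; rewrite hPhi0 /= => ->.
  exact: (hEinj c1 c2).
- move=> [W' hW'].
  have hb : Dt xi' W' = Phi Y by apply: functional_extensionality => k; rewrite hW'.
  have ha : Dt xi Y = fun _ => 0 by apply/cocycle_t_Dt.
  have [Y0 [e1 _]] := cone_full ha hb.
  by exists Y0 => k; rewrite e1.
Qed.

Lemma transfer_fwd r : dr_vanishes xi r -> dr_vanishes xi' r.
Proof.
move=> H n x' Y' hx' hY' [C' [hC' hCY']].
have [x [hx hxx]] := hEsurj hx'.
have [Y [hY hYY]] := D_surj hY'.
pose C := conn_wit xi x.
have hC : conn_rel xi x C := conn_ex xi hx.
have hcoc : cocycle_t xi (fun k => C k - tpow r.-1 Y k).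
  have hCc : cocycle_t xi C := conn_cocycle hxi h2 hC.
  move/cocycle_t_Dt: hCc => hCc; move/cocycle_t_Dt: (hY) => hYc.
  apply/cocycle_t_Dt; rewrite DtB hCc Dt_tpow hYc.
  by apply: functional_extensionality => k; rewrite tpowE; case: ifP; rewrite subrr.
have hPC := Phi_conn hC.
have w1 := conn_welldef hxi' h2 hPC hC' hxx.
have w2 := cobt_tpow r.-1 (cobtN hYY).
have hcob : coboundary_t xi (fun k => C k - tpow r.-1 Y k).
  apply: D_inj => //.
  rewrite hPhiB (F_tpow (hPhit (n:=n.+1))).
  apply: cobt_ext (cobtD (cobtD w1 hCY') w2) => k /=.
  rewrite !tpowE; case: ifP => _.
    by rewrite !subr0 addr0 subrK.
  by rewrite addrA subrK opprB addrA subrK.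
have [Z [hZ [hZt hZ0]]] := H n x Y hx hY (ex_intro _ C (conj hC hcob)).
exists (Phi Z); split; first exact: Phi_cocycle.
split; first by rewrite -(F_tpow (hPhit (n:=n.+1))); exact: Phi_cobt.
have c1 := cobt_j hYY.
have c2 := phi_cob hZ0.
rewrite hphiB -!hPhi0 in c2.
have := cobD (cobN c1) c2.
by rewrite opprB addrA subrK.
Qed.

Lemma transfer_bwd r : dr_vanishes xi' r -> dr_vanishes xi r.
Proof.
move=> H n x Y hx hY [C [hC hCY]].
have hPC := Phi_conn hC.
have hcob : coboundary_t xi' (fun k => Phi C k - tpow r.-1 (Phi Y) k).
  have := Phi_cobt hCY; rewrite hPhiB (F_tpow (hPhit (n:=n.+1))) //.
have [Z' [hZ' [hZ't hZ'0]]] := H n (phi x) (Phi Y) (phi_cocycle hx) (Phi_cocycle hY)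
   (ex_intro _ (Phi C) (conj hPC hcob)).
have [Z [hZ hZZ]] := D_surj hZ'.
exists Z; split => //; split.
- apply: D_inj.
    apply/cocycle_t_Dt; rewrite Dt_tpow (cocycle_t_Dt _ _).1 //.
    by apply: functional_extensionality => k; rewrite tpowE; case: ifP.
  rewrite (F_tpow (hPhit (n:=n.+1))).
  apply: cobt_ext (cobtD (cobt_tpow r.-1 hZZ) hZ't) => k.
  by rewrite !tpowE; case: ifP => _; rewrite ?subr0 ?addr0 // subrK.
- apply: hEinj.
    rewrite /cocycle ddB.
    have e1 := hY 0%N; have e2 := hZ 0%N; rewrite /Dt /= !addr0 in e1 e2.
    by rewrite e1 e2 subrr.
  rewrite hphiB -!hPhi0.
  have := cobB hZ'0 (cobt_j hZZ).
  by rewrite opprB addrA subrK.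
Qed.

End Transfer.

Section ZeroDiff.
Variable R : fieldType.
Variable B : dga R.
Hypothesis hB : forall n (b : car B n), dd b = 0.
Variable xi : car B 1.

Lemma zero_diff_vanish r : (2 <= r)%N -> dr_vanishes xi r.
Proof.
case: r => [|[|s]] // _.
move=> n x Y hx hY [C [[X [hX0 hXC]] [W hW]]].
pose V := X s.+1 - W s.
have eY0 : Y 0%N = mul xi V.
  have e1 := hW s.+1; rewrite tpowE ltnn subnn /Dt hB add0r in e1.
  have e2 := hXC s.+2; rewrite /tmul /Dt hB add0r in e2.
  rewrite /V mulBr -e1 /= e2. by rewrite opprB addrC subrK.
exists (fun k => if k is 0 then Y 0%N else 0); split; [|split].
- case => [|[|k]]; rewrite /Dt hB ?add0r //.
  + by have := hY 1%N; rewrite /Dt hB add0r.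
  + exact: (@mul0r _ _ 1 n.+1 xi).
- exists (fun k => if k == s then V else 0) => k.
  rewrite tpowE /Dt hB add0r.
  case: k => [|k] //=; rewrite ltnS.
  case: (ltngtP k s) => hk.
  + by rewrite (@mul0r _ _ 1 n xi).
  + rewrite subSS (@mul0r _ _ 1 n xi); move: hk; rewrite -subn_gt0; by case: (k - s)%N.
  + by rewrite hk subSS subnn eY0.
- by rewrite subrr; exact: cob0.
Qed.

End ZeroDiff.

Section Morph.
Variable R : fieldType.
Variables (A A' : dga R).
Variable f : forall n, car A n -> car A' n.
Hypothesis flin : forall n (a : R) (x y : car A n), @f n (a *: x + y) = a *: @f n x + @f n y.
Hypothesis fd : forall n (x : car A n), @f n.+1 (dd x) = dd (@f n x).
Hypothesis fmul : forall p q (x : car A p) (y : car A q), @f (p + q)%N (mul x y) = mul (@f p x) (@f q y).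
Variable xi : car A 1.

Lemma f0 n : @f n 0 = 0.
Proof.
have := flin 1 (0 : car A n) 0; rewrite !scale1r addr0 => h.
by apply: (@addrI _ (@f n 0)); rewrite addr0 -h.
Qed.

Lemma fB n (x y : car A n) : @f n (x - y) = @f n x - @f n y.
Proof.
have := flin (-1) y x; rewrite !scaleN1r addrC => ->; by rewrite addrC.
Qed.

Definition fPhi n (Y : series A n) : series A' n := fun k => @f n (Y k).

Lemma fPhiB n (Y Z : series A n) : fPhi (fun k => Y k - Z k) = fun k => fPhi Y k - fPhi Z k.
Proof. apply: functional_extensionality => k; exact: fB. Qed.

Lemma fPhit n (Y : series A n) : fPhi (tmul Y) = tmul (fPhi Y).
Proof. apply: functional_extensionality => -[|k] //=; exact: f0. Qed.

Lemma fPhiD n (Y : series A n) : fPhi (Dt xi Y) = Dt (@f 1 xi) (fPhi Y).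
Proof.
apply: functional_extensionality => k; rewrite /fPhi /Dt.
have fD : forall (x y : car A n.+1), @f n.+1 (x + y) = @f n.+1 x + @f n.+1 y.
  by move=> x y; have := flin 1 x y; rewrite !scale1r.
rewrite fD fd; congr (_ + _); case: k => [|k] //=; first exact: f0.
exact: (fmul xi (Y k)).
Qed.

Lemma fPhi0 n (Y : series A n) : fPhi Y 0%N = @f n (Y 0%N).
Proof. by []. Qed.

Lemma f_cocycle n (x : car A n) : cocycle x -> cocycle (@f n x).
Proof. by rewrite /cocycle -fd => ->; rewrite f0. Qed.

End Morph.

Section Gauge.
Variable R : fieldType.
Hypothesis hR : [pchar R] =i pred0.
Variable A : dga R.
Variables (w : car A 0) (xs xt : car A 1).
Hypothesis hw : xs - xt = dd w.

Lemma natr_neq0 k : (k.+1%:R : R) != 0.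
Proof. by have /pcharf0P -> := hR. Qed.

Lemma fact_neq0 k : (k`!%:R : R) != 0.
Proof. by have /pcharf0P -> := hR; rewrite -lt0n fact_gt0. Qed.

Fixpoint pw (i : nat) : car A 0 := if i is j.+1 then mul w (pw j) else one A.

Definition ee (i : nat) : car A 0 := (i`!%:R)^-1 *: pw i.

Lemma mul10 (eta : car A 1) (x : car A 0) : mul eta x = mul x eta.
Proof. by rewrite mulC tr_id muln0 expr0 scale1r. Qed.

Lemma mulA0 p q (x : car A 0) (y : car A p) (z : car A q) :
  mul (mul x y) z = mul x (mul y z).
Proof. by rewrite mulA tr_id. Qed.

Lemma mul_xi_0 n (eta : car A 1) (x : car A 0) (y : car A n) :
  mul eta (mul x y) = mul x (mul eta y).
Proof.
have := mulA eta x y; rewrite mul10 mulA0 => h.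
by rewrite h tr_id.
Qed.

Lemma leib0 n (x : car A 0) (y : car A n) : dd (mul x y) = mul (dd x) y + mul x (dd y).
Proof. by rewrite leibniz !tr_id expr0 scale1r. Qed.

Lemma dd_pw i : dd (pw i.+1) = i.+1%:R *: mul (pw i) (dd w).
Proof.
elim: i => [|i IH].
  rewrite /= scale1r mul1.
  have := mulr1 w; rewrite tr_id => ->. by [].
rewrite [pw i.+2]/= leib0 IH mulZr (mul10 (dd w)) -(mulA0 w (pw i) (dd w)).
have -> : pw i.+1 = mul w (pw i) by [].
by rewrite -[in RHS](addn1 i.+1) natrD scalerDl scale1r addrC.
Qed.

Lemma ee0 : ee 0 = one A.
Proof. by rewrite /ee /= invr1 scale1r. Qed.

Lemma dd_ee0 : dd (ee 0) = 0.
Proof. by rewrite ee0 dd_one. Qed.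

Lemma dd_ee i : dd (ee i.+1) = mul (ee i) (dd w).
Proof.
rewrite /ee ddZ dd_pw scalerA mulZl; congr (_ *: _).
rewrite factS natrM invfM mulrAC mulVf ?natr_neq0 //.
by rewrite mul1r.
Qed.

Definition conv n (Y : series A n) : series A n :=
  fun k => \sum_(i < k.+1) (mul (ee i) (Y (k - i)%N) : car A n).

Lemma dd_sum n k (F : 'I_k -> car A n) : dd (\sum_(i < k) F i) = \sum_(i < k) dd (F i).
Proof.
elim: k F => [|k IH] F; first by rewrite !big_ord0 dd0.
by rewrite !big_ord_recr /= ddD IH.
Qed.

Lemma mul_sum p n k (x : car A p) (F : 'I_k -> car A n) :
  mul x (\sum_(i < k) F i) = \sum_(i < k) mul x (F i).
Proof.
elim: k F => [|k IH] F; first by rewrite !big_ord0 mul0r.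
by rewrite !big_ord_recr /= mulDr IH.
Qed.

Lemma convB n (Y Z : series A n) : conv (fun k => Y k - Z k) = fun k => conv Y k - conv Z k.
Proof.
apply: functional_extensionality => k; rewrite /conv -sumrB.
by apply: eq_bigr => i _; rewrite mulBr.
Qed.

Lemma convt n (Y : series A n) : conv (tmul Y) = tmul (conv Y).
Proof.
apply: functional_extensionality => -[|k]; rewrite /conv /tmul.
  by rewrite big_ord1 /= (@mul0r _ _ 0 n).
rewrite big_ord_recr /= subnn mul0r addr0.
apply: eq_bigr => i _ /=.
have hi : (i <= k)%N by rewrite -ltnS.
by rewrite subSn.
Qed.

Lemma conv0 n (Y : series A n) : conv Y 0%N = Y 0%N.
Proof. by rewrite /conv big_ord1 /= ee0 mul1. Qed.

Lemma convD n (Y : series A n) : conv (Dt xs Y) = Dt xt (conv Y).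
Proof.
apply: functional_extensionality => -[|k].
  by rewrite conv0 /Dt /= conv0.
rewrite /conv /Dt dd_sum mul_sum.
under eq_bigr => i _ do rewrite mulDr.
rewrite big_split /=.
under [X in _ = X + _]eq_bigr => i _ do rewrite leib0.
rewrite big_split /= [X in _ = X + _]addrC -addrA; congr (_ + _).
rewrite big_ord_recr /= subnn /= (@mul0r _ _ 0 n.+1) addr0.
rewrite [in RHS]big_ord_recl /= dd_ee0 (@mul0l _ _ 1 n) add0r -big_split /=.
apply: eq_bigr => i _.
have hi : (i <= k)%N by rewrite -ltnS.
rewrite (subSn hi) /= /bump /= add1n subSS dd_ee mulA0 mul_xi_0.
rewrite -(mulDr (ee i) (mul (dd w) (Y (k - i)%N))) -(mulDl (dd w) xt (Y (k - i)%N)).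
by rewrite -hw subrK.
Qed.

End Gauge.

Theorem theorem3p14 (R : fieldType) (hR : [pchar R]%R =i pred0) (A : dga R)
    (hA : formal A) (xi : car A 1) (hxi : cocycle xi) :
  forall r : nat, (2 <= r)%N -> dr_vanishes xi r.
Proof.
move=> r hr.
have h2 : (2%:R : R) != 0 by have /pcharf0P -> := hR.
case: hA => M [B [hB [f [g [hf hg]]]]].
case: hf => flin fd fmul _ [finj fsurj].
case: hg => glin gd gmul _ [ginj gsurj].
have [xM [hxM [w hw]]] := fsurj 1%N xi hxi.
have hgx : cocycle (g 1%N xM) := @f_cocycle _ _ _ g glin gd 1%N xM hxM.
have hfx : cocycle (f 1%N xM) := @f_cocycle _ _ _ f flin fd 1%N xM hxM.
have V1 : dr_vanishes (g 1%N xM) r := zero_diff_vanish hB hr.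
have V2 : dr_vanishes xM r := transfer_bwd h2 hxM hgx (@fPhiB _ _ _ g glin) (@fPhit _ _ _ g glin)
  (@fPhiD _ _ _ g glin gd gmul xM) (@fPhi0 _ _ _ g) (@fB _ _ _ g glin) gd ginj gsurj V1.
have V3 : dr_vanishes (f 1%N xM) r := transfer_fwd h2 hxM hfx (@fPhiB _ _ _ f flin) (@fPhit _ _ _ f flin)
  (@fPhiD _ _ _ f flin fd fmul xM) (@fPhi0 _ _ _ f) (@fB _ _ _ f flin) fd finj fsurj V2.
have idB : forall n (x y : car A n), (fun n (x : car A n) => x) n (x - y) = x - y by [].
have idd : forall n (x : car A n), (fun n (x : car A n) => x) n.+1 (dd x) = dd x by [].
have idinj : forall n (x : car A n), cocycle x -> coboundary x -> coboundary x by [].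
have idsurj : forall n (y : car A n), cocycle y -> exists x, cocycle x /\ coboundary (x - y).
  by move=> n y hy; exists y; split => //; rewrite subrr; exact: cob0.
exact: (transfer_fwd h2 hfx hxi (@convB _ _ w) (@convt _ _ w) (@convD _ hR _ w _ _ hw)
  (@conv0 _ _ w) idB idd idinj idsurj V3).
Qed.
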